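(* Let $m\ge 1$, $n=2m$, and let $\gamma(X_0,X_1,\ldots,X_{m-1})\in\mathbb{F}_2[X_0,\ldots,X_{m-1}]$ be a reduced polynomial of algebraic degree $d$. Define the Boolean function $f:\mathbb{F}_2^n\to\mathbb{F}_2$ by $$f(x_0,\ldots,x_{n-1})=\sum_{i=0}^{m-1}x_ix_{i+m}+\gamma(x_0+x_m,\,x_1+x_{m+1},\,\ldots,\,x_{m-1}+x_{2m-1}).$$ Then $f$ is a bent function. Moreover, if $\gamma$ is rotation symmetric (i.e. $\gamma(X_0,X_1,\ldots,X_{m-1})=\gamma(X_1,\ldots,X_{m-1},X_0)$), then $f$ is a rotation symmetric bent function on $\mathbb{F}_2^n$. Furthermore, if $d\ge 2$, then $f$ has algebraic degree $d$.
   Context: Every Boolean function $f:\mathbb{F}_2^n\to\mathbb{F}_2$ is identified with its algebraic normal form, a reduced polynomial $\sum_{u\in\mathbb{F}_2^n}c_u\prod_{i=0}^{n-1}x_i^{u_i}$ with $c_u\in\mathbb{F}_2$ (each variable appears with exponent at most 1); its algebraic degree is the largest number of variables in a monomial with nonzero coefficient. $f$ is rotation symmetric if $f(x_1,x_2,\ldots,x_{n-1},x_0)=f(x_0,x_1,\ldots,x_{n-1})$ for all $x\in\mathbb{F}_2^n$. The Walsh transform is $\mathcal{W}_f(b)=\sum_{x\in\mathbb{F}_2^n}(-1)^{f(x)+\sum_i x_ib_i}$, and $f$ is bent if $\mathcal{W}_f(b)=\pm 2^{n/2}$ for all $b\in\mathbb{F}_2^n$. *)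

(* Defs.v *)
From mathcomp Require Import all_boot all_order all_algebra.
Set Implicit Arguments. Unset Strict Implicit. Unset Printing Implicit Defensive.
Import GRing.Theory Num.Theory.

Definition vec (n : nat) := {ffun 'I_n -> bool}.

Definition boolfun (n : nat) := vec n -> bool.

(* A reduced polynomial in F_2[X_0..X_{n-1}] (algebraic normal form):
   coefficient c_S for each monomial prod_{i in S} X_i, S a subset of vars. *)
Definition anf (n : nat) := {ffun {set 'I_n} -> bool}.

Definition anf_eval n (c : anf n) (x : vec n) : bool :=
  \big[addb/false]_(S : {set 'I_n} | c S) [forall i in S, x i].

(* Algebraic degree: largest number of variables of a monomial with
   nonzero coefficient (0 for the zero polynomial). *)
Definition anf_deg n (c : anf n) : nat :=
  \max_(S : {set 'I_n} | c S) #|S|.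

(* Every Boolean function has a unique ANF; f has algebraic degree d iff
   its ANF has degree d. *)
Definition alg_degree_is n (f : boolfun n) (d : nat) : Prop :=
  exists c : anf n, (forall x, anf_eval c x = f x) /\ anf_deg c = d.

Definition rot n (x : vec n) : vec n := [ffun i => x (ordS i)].

Definition rotation_symmetric n (f : boolfun n) : Prop :=
  forall x, f (rot x) = f x.

Definition dotb n (x b : vec n) : bool := \big[addb/false]_(i < n) (x i && b i).

Definition walsh n (f : boolfun n) (b : vec n) : int :=
  (\sum_(x : vec n) (-1) ^+ (f x (+) dotb x b))%R.

Definition bent n (f : boolfun n) : Prop :=
  forall b, walsh f b = Posz (2 ^ n./2) \/ walsh f b = (- Posz (2 ^ n./2))%R.

(* The function of the theorem on F_2^(2m), with indices split as
   lshift m i = i and rshift m i = m + i (i < m). *)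
Definition mm_gamma m (g : anf m) : boolfun (m + m) := fun x =>
  (\big[addb/false]_(i < m) (x (lshift m i) && x (rshift m i)))
  (+) anf_eval g [ffun i => x (lshift m i) (+) x (rshift m i)].

(* Main.v *)
Require Import Defs.
From mathcomp Require Import all_boot all_order all_algebra.
Set Implicit Arguments. Unset Strict Implicit. Unset Printing Implicit Defensive.
Import GRing.Theory Num.Theory.

Section Aux.
Variable m : nat.

Definition join (u v : vec m) : vec (m + m) :=
  [ffun j => match split j with inl i => u i | inr i => v i end].

Lemma join_l u v i : join u v (lshift m i) = u i.
Proof.
rewrite ffunE; case: split_ordP => k /eqP; rewrite eq_shift // => /eqP -> //.
Qed.

Lemma join_r u v i : join u v (rshift m i) = v i.
Proof.
rewrite ffunE; case: split_ordP => k /eqP; rewrite eq_shift // => /eqP -> //.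
Qed.

Lemma sum_split (F : vec (m + m) -> int) :
  (\sum_(x : vec (m + m)) F x = \sum_(u : vec m) \sum_(v : vec m) F (join u v))%R.
Proof.
rewrite pair_big /=.
rewrite (reindex (fun p : vec m * vec m => join p.1 p.2)) //.
exists (fun x : vec (m+m) => ([ffun i => x (lshift m i)], [ffun i => x (rshift m i)])).
  move=> [u v] _ /=; congr pair; apply/ffunP => i; rewrite ffunE ?join_l ?join_r //.
move=> x _ /=; apply/ffunP => j; case: (split_ordP j) => k ->;
  by rewrite ?join_l ?join_r ffunE.
Qed.

Definition vadd (u v : vec m) : vec m := [ffun i => u i (+) v i].

Lemma sign_big I (r : seq I) (P : pred I) (F : I -> bool) :
  ((-1) ^+ (\big[addb/false]_(i <- r | P i) F i) =
   \prod_(i <- r | P i) (-1) ^+ (F i) :> int)%R.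
Proof.
apply: (big_morph (fun b : bool => (-1) ^+ b : int)%R) => [a b|]; last exact: expr0.
exact: signr_addb.
Qed.

End Aux.

Section Bent.
Variable m : nat.
Variable g : anf m.
Local Open Scope ring_scope.

Lemma bool_sum (F : bool -> int) : \sum_(t : bool) F t = F true + F false.
Proof. by rewrite big_bool. Qed.

Lemma prod_char (w : 'I_m -> bool) :
  \sum_(u : vec m) \prod_i (-1) ^+ (u i && w i) =
  if [forall i, ~~ w i] then 2 ^+ m else 0 :> int.
Proof.
rewrite -(bigA_distr_bigA (fun i t => (-1) ^+ (t && w i) : int)) /=.
under eq_bigr do rewrite big_bool /=.
case: forallP => [h|h].
  under eq_bigr => i _ do rewrite (negbTE (h i)).
  by rewrite prodr_const card_ord.
have [i hi] : exists i, w i.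
  case: (pickP (fun i => w i)) => [i hi|h0]; first by exists i.
  by exfalso; apply: h => i; rewrite h0.
by rewrite (bigD1 i) //= hi expr1 addNr mul0r.
Qed.


Lemma key (b : vec (m + m)) (u z : vec m) :
  mm_gamma g (join u (vadd u z)) (+) dotb (join u (vadd u z)) b =
  (anf_eval g z (+) \big[addb/false]_(i < m) (z i && b (rshift m i)))
  (+) \big[addb/false]_(i < m)
        (u i && ~~ (z i (+) b (lshift m i) (+) b (rshift m i))).
Proof.
rewrite /mm_gamma /dotb big_split_ord /=.
have -> : [ffun i => join u (vadd u z) (lshift m i) (+) join u (vadd u z) (rshift m i)] = z.
  by apply/ffunP => i; rewrite ffunE join_l join_r /vadd ffunE addKb.
have h : \big[addb/false]_(i < m) (join u (vadd u z) (lshift m i) && join u (vadd u z) (rshift m i)) (+) (\big[addb/false]_(i < m) (join u (vadd u z) (lshift m i) && b (lshift m i)) (+) \big[addb/false]_(i < m) (join u (vadd u z) (rshift m i) && b (rshift m i))) = \big[addb/false]_(i < m) (z i && b (rshift m i)) (+) \big[addb/false]_(i < m) (u i && ~~ (z i (+) b (lshift m i) (+) b (rshift m i))).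
  rewrite -!big_split; apply: eq_bigr => i _; rewrite join_l join_r ffunE.
  by case: (u i); case: (z i); case: (b (lshift m i)); case: (b (rshift m i)).
by rewrite addbAC h [LHS]addbC addbA.
Qed.


Lemma vadd_inj (u : vec m) : injective (vadd u).
Proof.
move=> v1 v2 /ffunP h; apply/ffunP => i; move: (h i); rewrite !ffunE.
by move/(congr1 (addb (u i))); rewrite !addKb.
Qed.

Lemma walsh_mm (b : vec (m + m)) :
  let z0 : vec m := [ffun i => ~~ (b (lshift m i) (+) b (rshift m i))] in
  walsh (mm_gamma g) b =
  (-1) ^+ (anf_eval g z0 (+) \big[addb/false]_(i < m) (z0 i && b (rshift m i)))
  * 2 ^+ m.
Proof.
move=> z0; rewrite /walsh sum_split.
under eq_bigr => u _ do rewrite (reindex_inj (@vadd_inj u)) /=.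
under eq_bigr => u _ do under eq_bigr => z _ do rewrite key signr_addb sign_big.
rewrite exchange_big /=.
under eq_bigr => z _ do rewrite -mulr_sumr prod_char.
rewrite (bigD1 z0) //= [X in _ + X]big1 ?addr0.
  have -> // : [forall i, ~~ ~~ (z0 i (+) b (lshift m i) (+) b (rshift m i))].
  apply/forallP => i; rewrite ffunE.
  by case: (b (lshift m i)); case: (b (rshift m i)).
move=> z nz; case: forallP => [h|]; last by rewrite mulr0.
case/eqP: nz; apply/ffunP => i; move: (h i); rewrite ffunE negbK.
by case: (z i); case: (b (lshift m i)); case: (b (rshift m i)).
Qed.

Lemma bent_mm : bent (mm_gamma g).
Proof.
move=> b; rewrite /bent; have -> : (m + m)./2 = m by rewrite addnn doubleK.
rewrite walsh_mm -natz natrX.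
by case: (_ (+) _); [right; rewrite expr1 mulN1r | left; rewrite expr0 mul1r].
Qed.

End Bent.

From mathcomp Require Import zify.

Lemma ordS_shift m (i : 'I_m) :
  (ordS (lshift m i) = lshift m (ordS i) /\ ordS (rshift m i) = rshift m (ordS i)) \/
  (ordS (lshift m i) = rshift m (ordS i) /\ ordS (rshift m i) = lshift m (ordS i)).
Proof.
have hi := ltn_ord i.
case: (ltnP i.+1 m) => h; [left|right]; split; apply/val_inj => /=.
- by rewrite !modn_small //; lia.
- by rewrite !modn_small //; lia.
- have -> : i.+1 = m by lia.
  by rewrite modnn addn0 modn_small //; lia.
- have -> : i.+1 = m by lia.
  by rewrite modnn -addnS (_ : i.+1 = m) ?modnn //; lia.
Qed.

Lemma rot_mm m (g : anf m) :
  rotation_symmetric (anf_eval g) -> rotation_symmetric (mm_gamma g).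
Proof.
move=> hg x; rewrite /mm_gamma.
have e : forall i, Defs.rot x (lshift m i) && Defs.rot x (rshift m i) =
    [ffun j => x (lshift m j) && x (rshift m j)] (ordS i) /\
    Defs.rot x (lshift m i) (+) Defs.rot x (rshift m i) =
    [ffun j => x (lshift m j) (+) x (rshift m j)] (ordS i).
  move=> i; rewrite /Defs.rot !ffunE.
  by case: (ordS_shift i) => -[-> ->]; split => //; [exact: andbC | exact: addbC].
congr addb.
  under eq_bigr do rewrite (proj1 (e _)).
  rewrite -(reindex_inj (P := xpredT) (F := fun i => [ffun j => x (lshift m j) && x (rshift m j)] i) (@ordS_inj m)) /=.
  by apply: eq_bigr => i _; rewrite ffunE.
rewrite -[in RHS]hg; congr anf_eval; apply/ffunP => i.
by rewrite ffunE (proj2 (e i)) /Defs.rot [in RHS]ffunE.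
Qed.
Section Deg.
Variable m : nat.
Variable g : anf m.

Definition Q (i : 'I_m) : {set 'I_(m + m)} := [set lshift m i; rshift m i].
Definition Tm (S J : {set 'I_m}) : {set 'I_(m + m)} :=
  (@lshift m m @: (S :&: J)) :|: (@rshift m m @: (S :\: J)).

Lemma expand (S : {set 'I_m}) (x : vec (m + m)) :
  \big[addb/false]_(J : {set 'I_m} | ~: S \subset J) [forall j in Tm S J, x j] =
  [forall i in S, x (lshift m i) (+) x (rshift m i)].
Proof.
rewrite -big_andE [RHS]big_mkcond /=.
transitivity (\big[andb/true]_i ((if i \in S then x (lshift m i) else true)
   (+) (if i \in S then x (rshift m i) else false))); last first.
  by apply: eq_bigr => i _; case: (i \in S).
transitivity (\big[addb/false]_(J : {set 'I_m}) \big[andb/true]_i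
  (if i \in J then (if i \in S then x (lshift m i) else true)
   else (if i \in S then x (rshift m i) else false))); last first.
  by rewrite bigA_distr.
rewrite big_mkcond /=; apply: eq_bigr => J _.
case: ifP => hJ.
  rewrite big_andE; apply/forallP/forallP.
  move=> h i; apply/implyP => _.
  case hiJ: (i \in J); case hiS: (i \in S) => //.
  - apply: (implyP (h (lshift m i))); rewrite /Tm in_setU; apply/orP; left.
    by apply/imsetP; exists i => //; rewrite inE hiS hiJ.
  - apply: (implyP (h (rshift m i))); rewrite /Tm in_setU; apply/orP; right.
    by apply/imsetP; exists i => //; rewrite inE hiS hiJ.
  - by move/subsetP: hJ => /(_ i); rewrite in_setC hiS hiJ => /(_ isT).
  move=> h j; apply/implyP; rewrite /Tm in_setU => /orP [] /imsetP [i hi ->].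
    by move: hi (implyP (h i) isT); rewrite inE => /andP [-> ->].
  by move: hi (implyP (h i) isT); rewrite inE => /andP [/negbTE -> ->].
case/subsetPn: (negbT hJ) => i; rewrite in_setC => hiS hiJ.
by symmetry; rewrite (bigD1 i) //= (negbTE hiJ) (negbTE hiS).
Qed.

Definition cc : anf (m + m) := [ffun T =>
  \big[addb/false]_(i < m) (T == Q i) (+)
  \big[addb/false]_(S | g S) \big[addb/false]_(J : {set 'I_m} | ~: S \subset J)
     (T == Tm S J)].

Lemma xor_pred1 (T : finType) (t : T) (F : T -> bool) :
  \big[addb/false]_(j : T) ((j == t) && F j) = F t.
Proof.
rewrite (bigD1 t) //= eqxx big1 ?addbF // => j /negbTE -> //.
Qed.

Lemma eval_alt n (c : anf n) x :
  anf_eval c x = \big[addb/false]_T (c T && [forall i in T, x i]).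
Proof. by rewrite /anf_eval big_mkcond; apply: eq_bigr => T _; case: (c T). Qed.

Lemma cc_eval x : anf_eval cc x = mm_gamma g x.
Proof.
rewrite eval_alt /mm_gamma.
under eq_bigr do rewrite ffunE andb_addl.
rewrite big_split /=.
congr addb.
  under eq_bigr do rewrite big_distrl /=.
  rewrite exchange_big /=.
  apply: eq_bigr => i _; rewrite xor_pred1.
  apply/forallP/andP => [h|[h1 h2] j].
    by split; [apply: (implyP (h _)); rewrite /Q !inE eqxx | apply: (implyP (h _)); rewrite /Q !inE eqxx orbT].
  by apply/implyP; rewrite /Q !inE => /orP [] /eqP ->.
under eq_bigr do rewrite big_distrl /=.
rewrite exchange_big /= eval_alt big_mkcond /=; apply: eq_bigr => S _.
case: (g S); last first.
  by [].
under eq_bigr do rewrite big_distrl /=.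
rewrite exchange_big /=.
under eq_bigr do rewrite xor_pred1.
rewrite expand /=; apply: eq_forallb => i; by rewrite ffunE.
Qed.

Lemma xor_true (I : finType) (P : pred I) (F : I -> bool) :
  \big[addb/false]_(i | P i) F i -> exists i, P i && F i.
Proof.
case: (pickP (fun i => P i && F i)) => [i hi|h0]; first by exists i.
rewrite big1 // => i hPi; by move: (h0 i); rewrite hPi.
Qed.

Lemma card_Tm S J : #|Tm S J| <= #|S|.
Proof.
rewrite /Tm -(cardsID J S); apply: leq_trans (leq_card_setU _ _) _.
by apply: leq_add; apply: leq_imset_card.
Qed.

Lemma cc_upper T : 2 <= anf_deg g -> cc T -> #|T| <= anf_deg g.
Proof.
move=> hd; rewrite ffunE; case hA: (\big[addb/false]_(i < m) (T == Q i)) => /= hB.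
  case: (xor_true hA) => i /= /eqP ->.
  apply: leq_trans hd.
  by rewrite cards2; case: (_ != _).
case: (xor_true hB) => S /andP [gS hS].
case: (xor_true hS) => J /andP [_ /eqP ->].
apply: leq_trans (card_Tm S J) _.
exact: leq_bigmax_cond.
Qed.

Lemma Tm_l (S0 S J : {set 'I_m}) : ~: S \subset J ->
  (@lshift m m @: S0 == Tm S J) = (S == S0) && (J == setT).
Proof.
move=> hJ; apply/eqP/andP => [h|[/eqP -> /eqP ->]]; last first.
  by rewrite /Tm setIT setDT imset0 setU0.
have hSJ : S \subset J.
  apply/subsetP => i hiS; apply/negPn/negP => hiJ.
  have : rshift m i \in Tm S J.
    by rewrite /Tm in_setU; apply/orP; right; apply/imsetP; exists i; rewrite // inE hiS hiJ.
  by rewrite -h => /imsetP [k _ /eqP]; rewrite eq_rlshift.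
have eJ : J = setT.
  apply/eqP; rewrite eqEsubset subsetT /=; apply/subsetP => i _.
  case: (boolP (i \in S)) => hi; first exact: (subsetP hSJ).
  by apply: (subsetP hJ); rewrite in_setC.
split => //; last by rewrite eJ.
move: h; rewrite eJ /Tm setIT setDT imset0 setU0 => /imset_inj h.
by rewrite (h (@lshift_inj m m)).
Qed.

Lemma cc_deg : 2 <= anf_deg g -> anf_deg cc = anf_deg g.
Proof.
move=> hd.
have [S0 gS0 eS0] : {S0 | S0 \in [pred S | g S] & anf_deg g = #|S0|}.
  apply: eq_bigmax_cond.
  rewrite lt0n; apply/negP => /eqP /card0_eq h0.
  by move: hd; rewrite /anf_deg big_pred0.
apply/eqP; rewrite eqn_leq; apply/andP; split.
  by apply/bigmax_leqP => T hT; apply: cc_upper.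
rewrite eS0 -(card_imset _ (@lshift_inj m m)).
apply: leq_bigmax_cond.
rewrite ffunE big1 /=; last first.
  move=> i _; apply/negbTE/negP => /eqP h.
  have : rshift m i \in Q i by rewrite /Q !inE eqxx orbT.
  by rewrite -h => /imsetP [k _ /eqP]; rewrite eq_rlshift.
have e1 : forall S, \big[addb/false]_(J : {set 'I_m} | ~: S \subset J) (@lshift m m @: S0 == Tm S J) = (S == S0).
  move=> S; under eq_bigr => J hJ do rewrite Tm_l //.
  case: eqP => [->|_]; last by rewrite big1.
  rewrite (bigD1 setT) ?subsetT //= eqxx big1 // => J /andP [_ /negbTE ->].
  by [].
under eq_bigr do rewrite e1.
rewrite (bigD1 S0) //= eqxx big1 // => S /andP [_ /negbTE ->] //.
Qed.
End Deg.

Unset Implicit Arguments.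

Theorem theorem1 (m d : nat) (g : anf m) :
  1 <= m -> anf_deg g = d ->
  bent (mm_gamma g) /\
  (rotation_symmetric (anf_eval g) ->
     rotation_symmetric (mm_gamma g) /\ bent (mm_gamma g)) /\
  (2 <= d -> alg_degree_is (mm_gamma g) d).
Proof.
move=> hm hd; split; first exact: bent_mm.
split.
  by move=> hrot; split; [exact: rot_mm | exact: bent_mm].
move=> h2; exists (cc g); split; first exact: cc_eval.
by rewrite -hd cc_deg // hd.
Qed.
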